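(* Let $G$ be a group, $\mathcal H=\{H_1,\ldots,H_m\}$ a collection of subgroups of $G$, and $X$ a finite relative generating set of $G$ with respect to $\mathcal H$. The following are equivalent: (i) the relative Cayley graph $\Gamma^{rel}=\Gamma^{rel}_X(G)$ is hyperbolic; (ii) the left coset graph $\widetilde\Gamma=\widetilde\Gamma_X(G)$ is hyperbolic. Moreover, if $G$ is generated by $X$ in the usual (non-relative) sense, then (i) and (ii) are also equivalent to: (iii) the coned-off Cayley graph $\widehat\Gamma=\widehat\Gamma_X(G)$ is hyperbolic.
   Context: $X\subset G$ is a relative generating set with respect to $\mathcal H$ if $G$ is generated by $X\cup H_1\cup\cdots\cup H_m$. The relative Cayley graph $\Gamma^{rel}_X(G)$ is the Cayley graph of $G$ with respect to the generating set $X\cup H_1\cup\cdots\cup H_m$. The left coset graph $\widetilde\Gamma_X(G)$ is the oriented graph whose vertex set is $\{gH_i : i=1,\ldots,m,\ g\in G\}$, and for two different cosets $fH_i$, $gH_j$ there is an edge from $fH_i$ to $gH_j$ if and only if there exist $a\in fH_i$, $b\in gH_j$ with $b=ax$ for some $x\in X\cup X^{-1}\cup\{1\}$ (the edge is labelled $(i,j,x)$). If $G$ is generated by $X$, the coned-off Cayley graph $\widehat\Gamma_X(G)$ is obtained from the Cayley graph $\Gamma_X(G)$ by adding, for each left coset $gH_i$ ($i=1,\ldots,m$), a new vertex $v(gH_i)$ and an edge of length $1/2$ from each element of $gH_i$ to $v(gH_i)$. All graphs carry their path metrics (edges of the Cayley graphs have length 1). Hyperbolic means Gromov hyperbolic as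 a geodesic metric space. *)

(* Defs.v *)
From Stdlib Require Import Reals List.
Open Scope R_scope.
Set Implicit Arguments.

Record Group := {
  carrier :> Type;
  gmul : carrier -> carrier -> carrier;
  gone : carrier;
  ginv : carrier -> carrier;
  gmulA : forall x y z, gmul x (gmul y z) = gmul (gmul x y) z;
  gmul1 : forall x, gmul gone x = x;
  gmulV : forall x, gmul (ginv x) x = gone
}.

Arguments gmul {g}.
Arguments gone {g}.
Arguments ginv {g}.

Definition is_subgroup {G : Group} (H : G -> Prop) : Prop :=
  H gone /\ (forall x y, H x -> H y -> H (gmul x y)) /\ (forall x, H x -> H (ginv x)).

Definition generates {G : Group} (S : G -> Prop) : Prop :=
  forall g : G, exists l : list G,
    (forall s, In s l -> S s \/ S (ginv s)) /\ g = fold_right gmul gone l.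

Definition rel_generating {G : Group} (m : nat) (H : nat -> G -> Prop) (X : list G) :=
  @generates G (fun s => In s X \/ exists i, (i < m)%nat /\ H i s).

Definition lcoset {G : Group} (g : G) (H : G -> Prop) : G -> Prop :=
  fun a => exists h, H h /\ a = gmul g h.

Definition Coset {G : Group} (m : nat) (H : nat -> G -> Prop) :=
  { C : G -> Prop | exists (i : nat) (g : G), (i < m)%nat /\ C = lcoset g (H i) }.

(* wedge u v l : there is an (undirected) edge of length l between u and v *)
Record wgraph := { vert : Type; wedge : vert -> vert -> R -> Prop }.

Inductive walk {Gr : wgraph} : vert Gr -> vert Gr -> R -> Prop :=
| walk_nil (u : vert Gr) : walk u u 0
| walk_cons (u w v : vert Gr) (l l' : R) :
    (wedge Gr u w l \/ wedge Gr w u l) -> walk w v l' -> walk u v (l + l').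

Definition is_dist {Gr : wgraph} (u v : vert Gr) (r : R) : Prop :=
  (forall l, walk u v l -> r <= l) /\
  (forall eps, 0 < eps -> exists l, walk u v l /\ l < r + eps).

Definition connected (Gr : wgraph) : Prop :=
  forall u v : vert Gr, exists l, walk u v l.

(* Gromov hyperbolicity of the path metric (four-point condition on the
   vertex set; equivalent to hyperbolicity of the geodesic geometric
   realization) *)
Definition gprod (dxy dwx dwy : R) : R := (dwx + dwy - dxy) / 2.

Definition hyperbolic (Gr : wgraph) : Prop :=
  connected Gr /\
  exists delta, 0 <= delta /\
    forall (x y z w : vert Gr) dxy dxz dyz dwx dwy dwz,
      is_dist x y dxy -> is_dist x z dxz -> is_dist y z dyz ->
      is_dist w x dwx -> is_dist w y dwy -> is_dist w z dwz ->
      gprod dxy dwx dwy >= Rmin (gprod dxz dwx dwz) (gprod dyz dwy dwz) - delta.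

Definition cayley {G : Group} (S : G -> Prop) : wgraph :=
  {| vert := carrier G; wedge := fun g g' l => l = 1 /\ exists s, S s /\ g' = gmul g s |}.

Definition rel_cayley {G : Group} (m : nat) (H : nat -> G -> Prop) (X : list G) : wgraph :=
  @cayley G (fun s => In s X \/ exists i, (i < m)%nat /\ H i s).

Definition coset_graph {G : Group} (m : nat) (H : nat -> G -> Prop) (X : list G) : wgraph :=
  {| vert := @Coset G m H;
     wedge := fun C D l => l = 1 /\ proj1_sig C <> proj1_sig D /\
        exists a b x, proj1_sig C a /\ proj1_sig D b /\
          (In x X \/ In (ginv x) X \/ x = gone) /\ b = gmul a x |}.

Definition coned_off {G : Group} (m : nat) (H : nat -> G -> Prop) (X : list G) : wgraph :=
  {| vert := (carrier G + @Coset G m H)%type;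
     wedge := fun u v l =>
       match u, v with
       | inl g, inl g' => l = 1 /\ exists s, In s X /\ g' = gmul g s
       | inl g, inr C => l = 1/2 /\ proj1_sig C g
       | _, _ => False
       end |}.

(* Main.v *)
Require Import Defs.
From Stdlib Require Import Reals List.
From Stdlib Require Import Arith Lia Lra ClassicalEpsilon Classical ProofIrrelevance.
Open Scope nat_scope.

Section Metric.
Variable V : Type.
Variable adj : V -> V -> Prop.
Definition step (u v : V) := adj u v \/ adj v u.

Inductive upath : V -> V -> nat -> Prop :=
| up_nil u : upath u u 0
| up_cons u w v n : step u w -> upath w v n -> upath u v (S n).

Definition gconn := forall u v, exists n, upath u v n.

Lemma least_ex (P : nat -> Prop) : (exists n, P n) -> exists n, P n /\ forall k, P k -> n <= k.
Proof.
  intros [n Hn]. revert Hn. induction n as [n IH] using lt_wf_ind. intros Hn.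
  destruct (classic (exists k, k < n /\ P k)) as [[k [Hk Pk]]|Hno].
  - exact (IH k Hk Pk).
  - exists n; split; auto. intros k Pk. destruct (le_lt_dec n k); auto.
    exfalso; apply Hno; eauto.
Qed.

Definition d (u v : V) : nat :=
  epsilon (inhabits 0) (fun n => upath u v n /\ forall k, upath u v k -> n <= k).

Hypothesis conn : gconn.

Lemma d_spec u v : upath u v (d u v) /\ forall k, upath u v k -> d u v <= k.
Proof.
  unfold d. apply epsilon_spec. apply least_ex. apply conn.
Qed.

Lemma d_path u v : upath u v (d u v). Proof. apply d_spec. Qed.
Lemma d_min u v n : upath u v n -> d u v <= n. Proof. apply d_spec. Qed.

Lemma d_refl u : d u u = 0.
Proof. pose proof (d_min u u 0 (up_nil u)). lia. Qed.

Lemma upath_app u v w n k : upath u v n -> upath v w k -> upath u w (n + k).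
Proof. induction 1; simpl; auto. intros. econstructor; eauto. Qed.

Lemma upath_rev u v n : upath u v n -> upath v u n.
Proof.
  induction 1 as [|u w v n Hs Hp IH]. constructor.
  replace (S n) with (n + 1) by lia. eapply upath_app; eauto.
  econstructor. destruct Hs; [right|left]; eassumption. constructor.
Qed.

Lemma d_sym u v : d u v = d v u.
Proof.
  pose proof (d_min u v _ (upath_rev _ _ _ (d_path v u))).
  pose proof (d_min v u _ (upath_rev _ _ _ (d_path u v))). lia.
Qed.

Lemma d_tri u v w : d u w <= d u v + d v w.
Proof. apply d_min. eapply upath_app; apply d_path. Qed.

Lemma d_step u v : step u v -> d u v <= 1.
Proof. intros. apply d_min. econstructor; eauto. constructor. Qed.

Lemma d_zero u v : d u v = 0 -> u = v.
Proof. intros H. pose proof (d_path u v) as P. rewrite H in P. inversion P; auto. Qed.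

Lemma upath_seq u v n : upath u v n -> exists p : nat -> V,
  p 0 = u /\ p n = v /\ forall i, i < n -> step (p i) (p (S i)).
Proof.
  induction 1.
  - exists (fun _ => u). split; auto. split; auto. intros; lia.
  - destruct IHupath as [p [E0 [E1 E2]]].
    exists (fun i => match i with 0 => u | S i' => p i' end).
    split; auto. split; auto. intros [|i] Hi; simpl.
    + subst; auto.
    + apply E2; lia.
Qed.

Definition geod (x y : V) (g : nat -> V) : Prop :=
  g 0 = x /\ g (d x y) = y /\
  forall i j, i <= d x y -> j <= d x y -> d (g i) (g j) = i - j + (j - i).

Lemma seq_lip (c : nat -> V) (A N : nat) :
  (forall i, i < N -> d (c i) (c (S i)) <= A) ->
  forall i j, i <= j -> j <= N -> d (c i) (c j) <= A * (j - i).
Proof.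
  intros H i j Hij HjN. induction j.
  - assert (i = 0) by lia. subst. rewrite d_refl. lia.
  - destruct (Nat.eq_dec i (S j)). subst. rewrite d_refl; lia.
    pose proof (d_tri (c i) (c j) (c (S j))). pose proof (H j ltac:(lia)).
    specialize (IHj ltac:(lia) ltac:(lia)). nia.
Qed.

Lemma geod_ex x y : exists g, geod x y g.
Proof.
  destruct (upath_seq _ _ _ (d_path x y)) as [p [H0 [H1 H2]]].
  set (n := d x y) in *.
  assert (Hle : forall i j, i <= j -> j <= n -> d (p i) (p j) <= j - i).
  { intros. pose proof (seq_lip p 1 n) as L.
    assert (forall i, i < n -> d (p i) (p (S i)) <= 1) by (intros; apply d_step; auto).
    specialize (L H4 i j H H3). lia. }
  exists p. split; auto. split; auto. intros i j Hi Hj.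
  assert (Heq : forall i j, i <= j -> j <= n -> d (p i) (p j) = j - i).
  { intros a b Hab Hb. pose proof (Hle a b Hab Hb) as Q1.
    pose proof (Hle 0 a ltac:(lia) ltac:(lia)) as Q2. pose proof (Hle b n Hb ltac:(lia)) as Q3.
    pose proof (d_tri (p 0) (p a) (p n)) as Q4. pose proof (d_tri (p a) (p b) (p n)) as Q5.
    rewrite H0 in Q2, Q4; rewrite H1 in Q3, Q4, Q5. fold n in Q4. lia. }
  destruct (le_lt_dec i j). rewrite Heq; lia.
  rewrite d_sym, Heq; lia.
Qed.


Lemma geod_d x y g : geod x y g -> forall i j, i <= d x y -> j <= d x y -> d (g i) (g j) = i - j + (j - i).
Proof. intros [_ [_ H]]; auto. Qed.

Lemma geod_rev x y g : geod x y g -> geod y x (fun i => g (d x y - i)).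
Proof.
  intros [H0 [H1 H2]]. unfold geod. rewrite (d_sym y x). split; [|split].
  - rewrite Nat.sub_0_r; auto.
  - rewrite Nat.sub_diag; auto.
  - intros i j Hi Hj. rewrite H2; lia.
Qed.

Lemma geod_sub x y g a b : geod x y g -> a <= b -> b <= d x y ->
  geod (g a) (g b) (fun t => g (a + t)).
Proof.
  intros [H0 [H1 H2]] Hab Hb.
  assert (E : d (g a) (g b) = b - a) by (rewrite H2; lia).
  unfold geod; rewrite E. split; [|split].
  - rewrite Nat.add_0_r; auto.
  - f_equal; lia.
  - intros i j Hi Hj. rewrite H2; lia.
Qed.

Definition fourpt (delta : nat) := forall x y z w,
  d x y + d z w <= Nat.max (d x z + d y w) (d x w + d y z) + 2 * delta.

Definition slim (s : nat) := forall x y z a b c, geod x y a -> geod y z b -> geod x z c ->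
  forall i, i <= d x y -> exists j, (j <= d y z /\ d (a i) (b j) <= s) \/ (j <= d x z /\ d (a i) (c j) <= s).

Lemma near_geod delta : fourpt delta -> forall x z c p, geod x z c ->
  exists j, j <= d x z /\ 2 * d p (c j) <= d p x + d p z - d x z + 1 + 4 * delta.
Proof.
  intros F x z c p Hc. destruct Hc as [C0 [C1 C2]].
  assert (T1 := d_tri x p z). assert (T2 := d_tri p x z). assert (T3 := d_tri x z p).
  rewrite (d_sym x p) in *. rewrite (d_sym z p) in *.
  set (j := (d p x + d x z - d p z) / 2).
  assert (Hj2 : 2 * j <= d p x + d x z - d p z /\ d p x + d x z - d p z <= 2 * j + 1).
  { pose proof (Nat.div_mod (d p x + d x z - d p z) 2 ltac:(lia)) as M1.
    pose proof (Nat.mod_upper_bound (d p x + d x z - d p z) 2 ltac:(lia)) as M2.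
    fold j in M1. lia. }
  assert (Hj : j <= d x z) by lia.
  exists j. split; auto.
  pose proof (F p (c j) x z) as Q.
  assert (E1 : d (c j) x = j).
  { pose proof (C2 j 0 Hj ltac:(lia)) as G. rewrite C0 in G. lia. }
  assert (E2 : d (c j) z = d x z - j).
  { pose proof (C2 j (d x z) Hj ltac:(lia)) as G. rewrite C1 in G. lia. }
  rewrite E1, E2 in Q. lia.
Qed.

Lemma fourpt_slim delta : fourpt delta -> slim (3 * delta + 1).
Proof.
  intros F x y z a b c Ha Hb Hc i Hi.
  set (p := a i).
  assert (Dx : d p x = i).
  { unfold p. destruct Ha as [A0 [A1 A2]]. pose proof (A2 i 0 Hi ltac:(lia)) as G. rewrite A0 in G. lia. }
  assert (Dy : d p y = d x y - i).
  { unfold p. destruct Ha as [A0 [A1 A2]]. pose proof (A2 i (d x y) Hi ltac:(lia)) as G. rewrite A1 in G. lia. }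
  pose proof (F x y z p) as Q.
  rewrite (d_sym x p), (d_sym y p), (d_sym z p) in Q.
  destruct (le_lt_dec (d x y + d p z) (d x z + d p y + 2 * delta)).
  - destruct (near_geod delta F x z c p Hc) as [j [Hj Hd]].
    exists j. right. split; auto. lia.
  - destruct (near_geod delta F y z b p Hb) as [j [Hj Hd]].
    exists j. left. split; auto. lia.
Qed.


Definition apath (A N : nat) (c : nat -> V) := forall i, i < N -> d (c i) (c (S i)) <= A.

Lemma log_small A N c g : N <= 1 -> apath A N c -> geod (c 0) (c N) g ->
  forall j, j <= d (c 0) (c N) -> exists i, i <= N /\ d (g j) (c i) <= A.
Proof.
  intros HN Hc [G0 [G1 G2]] j Hj. exists 0. split; [lia|].
  pose proof (G2 j 0 Hj ltac:(lia)) as E. rewrite G0 in E. rewrite E.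
  destruct N as [|[|N]]; try lia.
  - rewrite d_refl in Hj. lia.
  - specialize (Hc 0 ltac:(lia)). lia.
Qed.

Lemma log_lemma s A : slim s -> forall k N c g, N <= 2 ^ k -> apath A N c -> geod (c 0) (c N) g ->
  forall j, j <= d (c 0) (c N) -> exists i, i <= N /\ d (g j) (c i) <= s * k + A.
Proof.
  intros S. induction k; intros N c g HN Hc Hg j Hj.
  - simpl in HN. destruct (log_small A N c g HN Hc Hg j Hj) as [i [Hi Hd]]. exists i; split; auto; lia.
  - destruct (le_lt_dec N 1) as [Hs|Hl].
    { destruct (log_small A N c g Hs Hc Hg j Hj) as [i [Hi Hd]]. exists i; split; auto; lia. }
    set (M := N / 2).
    assert (HM : 2 * M <= N /\ N <= 2 * M + 1).
    { pose proof (Nat.div_mod N 2 ltac:(lia)) as M1.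
      pose proof (Nat.mod_upper_bound N 2 ltac:(lia)) as M2. fold M in M1. lia. }
    simpl in HN.
    destruct (geod_ex (c 0) (c M)) as [b Hb].
    destruct (geod_ex (c M) (c N)) as [b' Hb'].
    pose proof (geod_rev _ _ _ Hb') as Hbr.
    destruct (S (c 0) (c N) (c M) g _ b Hg Hbr Hb j Hj) as [j' [[Hj' Hd]|[Hj' Hd]]].
    +
      set (c' := fun t => c (M + t)).
      assert (Hc' : apath A (N - M) c').
      { intros t Ht. unfold c'. rewrite Nat.add_succ_r. apply Hc. lia. }
      assert (Hg' : geod (c' 0) (c' (N - M)) b').
      { unfold c'. rewrite Nat.add_0_r. replace (M + (N - M)) with N by lia. auto. }
      rewrite (d_sym (c N) (c M)) in Hj'.
      assert (Hj2 : d (c M) (c N) - j' <= d (c' 0) (c' (N - M))).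
      { unfold c'. rewrite Nat.add_0_r. replace (M + (N - M)) with N by lia. lia. }
      destruct (IHk (N - M) c' b' ltac:(lia) Hc' Hg' _ Hj2) as [i [Hi Hdi]].
      exists (M + i). split; [lia|].
      pose proof (d_tri (g j) (b' (d (c M) (c N) - j')) (c (M + i))). unfold c' in Hdi.
      lia.
    + destruct (IHk M c b ltac:(lia) ltac:(intros t Ht; apply Hc; lia) Hb j' Hj') as [i [Hi Hdi]].
      exists i. split; [lia|].
      pose proof (d_tri (g j) (b j') (c i)). lia.
Qed.


Definition qg (L N : nat) (c : nat -> V) := forall i j, i <= N -> j <= N ->
  i - j + (j - i) <= L * d (c i) (c j) + L.

Definition cat (n1 : nat) (p1 p2 : nat -> V) : nat -> V :=
  fun t => if t <? n1 then p1 t else p2 (t - n1).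

Lemma cat_props A n1 n2 p1 p2 : apath A n1 p1 -> apath A n2 p2 -> p1 n1 = p2 0 ->
  apath A (n1 + n2) (cat n1 p1 p2) /\ cat n1 p1 p2 0 = p1 0 /\ cat n1 p1 p2 (n1 + n2) = p2 n2 /\
  forall t, t <= n1 + n2 -> (exists t', t' <= n1 /\ cat n1 p1 p2 t = p1 t') \/
                             (exists t', t' <= n2 /\ cat n1 p1 p2 t = p2 t').
Proof.
  intros H1 H2 E. unfold cat. split; [|split; [|split]].
  - intros t Ht. destruct (Nat.ltb_spec t n1); destruct (Nat.ltb_spec (S t) n1).
    + apply H1; lia.
    + assert (S t = n1) by lia. subst n1. rewrite Nat.sub_diag, <- E. apply H1; lia.
    + lia.
    + replace (S t - n1) with (S (t - n1)) by lia. apply H2; lia.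
  - destruct (Nat.ltb_spec 0 n1); auto. assert (n1 = 0) by lia. subst. rewrite E; auto.
  - destruct (Nat.ltb_spec (n1 + n2) n1). lia. f_equal; lia.
  - intros t Ht. destruct (Nat.ltb_spec t n1).
    + left. exists t. split; auto; lia.
    + right. exists (t - n1). split; auto; lia.
Qed.

Lemma geod_apath A x y g : 1 <= A -> geod x y g -> apath A (d x y) g.
Proof. intros HA [_ [_ G]] t Ht. rewrite G; lia. Qed.

Lemma exp_bound a b : exists K, forall k, 2 ^ k <= a * k + b -> k <= K.
Proof.
  assert (Sq : forall k, 4 <= k -> k * k <= 2 ^ k).
  { intros k Hk. induction Hk. simpl; lia.
    rewrite Nat.pow_succ_r'. nia. }
  exists (a + b + 4). intros k Hk. destruct (le_lt_dec k (a + b + 4)); auto.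
  specialize (Sq k ltac:(lia)). nia.
Qed.

Lemma pow_choose N' : exists k, N' <= 2 ^ k /\ 2 ^ k <= 2 * N' + 1.
Proof.
  destruct (least_ex (fun k => N' <= 2 ^ k)) as [k [Hk Hmin]].
  { exists N'. pose proof (Nat.pow_gt_lin_r 2 N' ltac:(lia)). lia. }
  exists k. split; auto. destruct k. simpl; lia.
  destruct (le_lt_dec N' (2 ^ k)) as [h|h]. specialize (Hmin k h). lia.
  rewrite Nat.pow_succ_r'. lia.
Qed.

Lemma seg_path A N c i1 i2 : apath A N c -> i1 <= N -> i2 <= N ->
  let cm := fun t => c (if i1 <=? i2 then i1 + t else i1 - t) in
  apath A (i1 - i2 + (i2 - i1)) cm /\ cm 0 = c i1 /\ cm (i1 - i2 + (i2 - i1)) = c i2 /\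
  forall t, t <= i1 - i2 + (i2 - i1) -> exists i, i <= N /\ cm t = c i.
Proof.
  intros Hc H1 H2 cm. unfold cm. destruct (Nat.leb_spec i1 i2).
  - split; [|split; [|split]].
    + intros t Ht. rewrite Nat.add_succ_r. apply Hc. lia.
    + f_equal; lia.
    + f_equal; lia.
    + intros t Ht. exists (i1 + t). split; auto; lia.
  - split; [|split; [|split]].
    + intros t Ht. rewrite d_sym. replace (i1 - t) with (S (i1 - S t)) by lia. apply Hc. lia.
    + f_equal; lia.
    + f_equal; lia.
    + intros t Ht. exists (i1 - t). split; auto; lia.
Qed.


Lemma morse_core s A L : slim s -> 1 <= A -> forall N c g D j0,
  apath A N c -> qg L N c -> geod (c 0) (c N) g -> j0 <= d (c 0) (c N) ->
  (forall j, j <= d (c 0) (c N) -> exists i, i <= N /\ d (g j) (c i) <= D) ->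
  (forall i, i <= N -> D <= d (g j0) (c i)) ->
  exists k, D <= s * k + A /\ 2 ^ k <= 2 * ((6 * L + 2) * D + L) + 1.
Proof.
  intros Sl HA N c g D j0 Hc Hq Hg Hj0 Hnear Hfar.
  set (n := d (c 0) (c N)) in *.
  pose proof Hg as [G0 [G1 G2]]. fold n in G1, G2.
  set (jy := j0 - 2 * D). set (jz := Nat.min (j0 + 2 * D) n).
  assert (I1 : exists i1, i1 <= N /\ d (g jy) (c i1) <= D /\ (jy = 0 -> g jy = c i1)).
  { destruct (Nat.eq_dec jy 0) as [e|e].
    - exists 0. rewrite e, G0, d_refl. split; [lia|split; auto; lia].
    - destruct (Hnear jy ltac:(unfold jy; lia)) as [i [Hi Hd]]. exists i. split; auto. split; auto.
      intros; lia. }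
  assert (I2 : exists i2, i2 <= N /\ d (c i2) (g jz) <= D /\ (jz = n -> g jz = c i2)).
  { destruct (Nat.eq_dec jz n) as [e|e].
    - exists N. rewrite e, G1, d_refl. split; [lia|split; auto; lia].
    - destruct (Hnear jz ltac:(unfold jz; lia)) as [i [Hi Hd]]. exists i. split; auto.
      rewrite d_sym. split; auto. intros; lia. }
  destruct I1 as [i1 [Hi1 [Hd1 He1]]]. destruct I2 as [i2 [Hi2 [Hd2 He2]]].
  destruct (geod_ex (g jy) (c i1)) as [s1 Hs1].
  destruct (geod_ex (c i2) (g jz)) as [s2 Hs2].
  set (a := d (g jy) (c i1)) in *. set (e := d (c i2) (g jz)) in *.
  assert (F1 : forall t, t <= a -> D <= d (g j0) (s1 t)).
  { intros t Ht. destruct (Nat.eq_dec jy 0) as [z|z].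
    - specialize (He1 z). assert (a = 0) by (unfold a; rewrite He1, d_refl; auto).
      assert (t = 0) by lia. subst t. destruct Hs1 as [S0 _]. rewrite S0, He1. apply Hfar; auto.
    - pose proof (G2 j0 jy Hj0 ltac:(unfold jy; lia)) as E.
      destruct Hs1 as [S0 [S1 S2]]. fold a in S1, S2.
      pose proof (S2 0 t ltac:(lia) Ht) as E2. rewrite S0 in E2.
      pose proof (d_tri (g j0) (s1 t) (g jy)). rewrite (d_sym (s1 t) (g jy)) in *.
      unfold jy in *. lia. }
  assert (F2 : forall t, t <= e -> D <= d (g j0) (s2 t)).
  { intros t Ht. destruct (Nat.eq_dec jz n) as [z|z].
    - specialize (He2 z). assert (e = 0) by (unfold e; rewrite He2, d_refl; auto).
      assert (t = 0) by lia. subst t. destruct Hs2 as [S0 _]. rewrite S0. apply Hfar; auto.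
    - pose proof (G2 j0 jz Hj0 ltac:(unfold jz; lia)) as E.
      destruct Hs2 as [S0 [S1 S2]]. fold e in S1, S2.
      pose proof (S2 t e Ht ltac:(lia)) as E2. rewrite S1 in E2.
      pose proof (d_tri (g j0) (s2 t) (g jz)).
      unfold jz in *. lia. }
  destruct (seg_path A N c i1 i2 Hc Hi1 Hi2) as [Cp [C0 [C1 C2]]].
  set (b := i1 - i2 + (i2 - i1)) in *.
  set (cm := fun t => c (if i1 <=? i2 then i1 + t else i1 - t)) in *.
  assert (Ha1 := geod_apath A _ _ _ HA Hs1). fold a in Ha1.
  assert (Ha2 := geod_apath A _ _ _ HA Hs2). fold e in Ha2.
  assert (J1 : s1 a = cm 0).
  { pose proof Hs1 as [_ [X _]]. fold a in X. rewrite X. symmetry. exact C0. }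
  destruct (cat_props A a b s1 cm Ha1 Cp J1) as [P1p [P10 [P1e P1pts]]].
  assert (J2 : cat a s1 cm (a + b) = s2 0).
  { rewrite P1e. pose proof Hs2 as [X _]. rewrite X. exact C1. }
  destruct (cat_props A (a + b) e _ s2 P1p Ha2 J2) as [Pp [P0 [Pe Ppts]]].
  set (P := cat (a + b) (cat a s1 cm) s2) in *.
  assert (Far : forall t, t <= a + b + e -> D <= d (g j0) (P t)).
  { intros t Ht. destruct (Ppts t Ht) as [[t' [Ht' E]]|[t' [Ht' E]]]; rewrite E.
    - destruct (P1pts t' Ht') as [[u [Hu E']]|[u [Hu E']]]; rewrite E'.
      + apply F1; auto.
      + destruct (C2 u Hu) as [i [Hi E'']]. change (D <= d (g j0) (c (if i1 <=? i2 then i1 + u else i1 - u))). rewrite E''. apply Hfar; auto.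
    - apply F2; auto. }
  assert (Hjyz : jy <= jz) by (unfold jy, jz; lia).
  pose proof (geod_sub _ _ _ jy jz Hg Hjyz ltac:(unfold jz; lia)) as Hg'.
  rewrite P10 in P0. destruct Hs1 as [S10 _]. rewrite S10 in P0.
  destruct Hs2 as [_ [S21 _]]. fold e in S21. rewrite S21 in Pe.
  rewrite <- P0, <- Pe in Hg'.
  destruct (pow_choose (a + b + e)) as [k [Hk1 Hk2]].
  assert (Djj : d (g jy) (g jz) = jz - jy) by (rewrite G2; unfold jz in *; lia).
  assert (Hidx : j0 - jy <= d (P 0) (P (a + b + e))) by (rewrite P0, Pe, Djj; unfold jy, jz; lia).
  destruct (log_lemma s A Sl k (a + b + e) P _ Hk1 Pp Hg' (j0 - jy) Hidx) as [t [Ht Hdt]].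
  replace (jy + (j0 - jy)) with j0 in Hdt by (unfold jy; lia).
  pose proof (Far t Ht) as Ft.
  exists k. split; [lia|].
  assert (Hb : b <= L * d (c i1) (c i2) + L) by (apply Hq; auto).
  pose proof (d_tri (c i1) (g jy) (c i2)) as T1. pose proof (d_tri (g jy) (g jz) (c i2)) as T2.
  rewrite (d_sym (c i1) (g jy)) in T1. fold a in T1. rewrite (d_sym (g jz) (c i2)) in T2. fold e in T2.
  assert (jz - jy <= 4 * D) by (unfold jy, jz; lia).
  assert (Hd12 : d (c i1) (c i2) <= 6 * D) by lia.
  assert (L * d (c i1) (c i2) <= L * (6 * D)) by (apply Nat.mul_le_mono_l; auto).
  nia.
Qed.


Lemma morse2 s A L : slim s -> 1 <= A -> exists K, forall N c g,
  apath A N c -> qg L N c -> geod (c 0) (c N) g ->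
  forall j, j <= d (c 0) (c N) -> exists i, i <= N /\ d (g j) (c i) <= K.
Proof.
  intros Sl HA.
  destruct (exp_bound (2 * (6 * L + 2) * s) (2 * (6 * L + 2) * A + 2 * L + 1)) as [K0 HK0].
  exists (s * K0 + A). intros N c g Hc Hq Hg.
  set (n := d (c 0) (c N)).
  destruct (least_ex (fun D => forall j, j <= n -> exists i, i <= N /\ d (g j) (c i) <= D)) as [D0 [HD0 Hmin]].
  { exists n. intros j Hj. exists 0. split; [lia|].
    destruct Hg as [G0 [_ G2]]. rewrite <- G0. rewrite G2; fold n; lia. }
  assert (Hb : D0 <= s * K0 + A).
  { destruct D0 as [|D1]. lia.
    assert (Hex : exists j0, j0 <= n /\ forall i, i <= N -> S D1 <= d (g j0) (c i)).
    { apply NNPP. intros Hno.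
      assert (HP : forall j, j <= n -> exists i, i <= N /\ d (g j) (c i) <= D1).
      { intros j Hj. apply NNPP. intros Hni. apply Hno. exists j. split; auto.
        intros i Hi. destruct (le_lt_dec (d (g j) (c i)) D1) as [h|h]; [|lia].
        exfalso. apply Hni. exists i. split; auto. }
      specialize (Hmin D1 HP). lia. }
    destruct Hex as [j0 [Hj0 Hfar]].
    destruct (morse_core s A L Sl HA N c g (S D1) j0 Hc Hq Hg Hj0 HD0 Hfar) as [k [Hk1 Hk2]].
    assert (2 ^ k <= 2 * (6 * L + 2) * s * k + (2 * (6 * L + 2) * A + 2 * L + 1)).
    { assert ((6 * L + 2) * S D1 <= (6 * L + 2) * (s * k + A)) by (apply Nat.mul_le_mono_l; auto).
      nia. }
    specialize (HK0 k H). 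
    assert (s * k <= s * K0) by (apply Nat.mul_le_mono_l; auto). lia. }
  intros j Hj. destruct (HD0 j Hj) as [i [Hi Hd]]. exists i. split; auto. lia.
Qed.

Lemma last_true (Q : nat -> Prop) n : Q 0 -> exists j, j <= n /\ Q j /\ (j = n \/ ~ Q (S j)).
Proof.
  intros Q0. induction n.
  - exists 0. auto.
  - destruct IHn as [j [Hj [Qj [E|NQ]]]].
    + subst j. destruct (classic (Q (S n))) as [h|h].
      * exists (S n). auto.
      * exists n. auto.
    + exists j. auto.
Qed.

Lemma morse1 s A L : slim s -> 1 <= A -> exists K, forall N c g,
  apath A N c -> qg L N c -> geod (c 0) (c N) g ->
  forall t, t <= N -> exists j, j <= d (c 0) (c N) /\ d (c t) (g j) <= K.
Proof.
  intros Sl HA. destruct (morse2 s A L Sl HA) as [K2 HK2].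
  exists (K2 + A * (L * (2 * K2 + 1) + L)). intros N c g Hc Hq Hg t Ht.
  set (n := d (c 0) (c N)).
  pose proof Hg as [G0 [G1 G2]]. fold n in G1, G2.
  destruct (last_true (fun j => exists i, i <= t /\ d (g j) (c i) <= K2) n) as [j [Hj [[i1 [Hi1 Hd1]] Hend]]].
  { exists 0. split; [lia|]. rewrite G0, d_refl. lia. }
  assert (Hi2 : exists i2, t <= i2 /\ i2 <= N /\ d (c i1) (c i2) <= 2 * K2 + 1).
  { destruct (Nat.eq_dec j n) as [E|E].
    - exists N. split; auto. split; auto. subst j. rewrite G1 in Hd1. rewrite d_sym. lia.
    - destruct Hend as [E'|NQ]; [lia|].
      destruct (HK2 N c g Hc Hq Hg (S j) ltac:(fold n; lia)) as [i2 [Hi2 Hd2]].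
      exists i2. split.
      + destruct (le_lt_dec i2 t) as [h|h]; [|lia]. exfalso. apply NQ. exists i2. auto.
      + split; auto. pose proof (G2 j (S j) Hj ltac:(lia)) as E1.
        pose proof (d_tri (c i1) (g j) (c i2)). pose proof (d_tri (g j) (g (S j)) (c i2)).
        rewrite (d_sym (c i1) (g j)) in *. lia. }
  destruct Hi2 as [i2 [Ht2 [Hi2 Hd12]]].
  pose proof (Hq i2 i1 Hi2 ltac:(lia)) as Q.
  pose proof (seq_lip c A N Hc i1 t Hi1 Ht) as Lp.
  exists j. split; auto.
  pose proof (d_tri (c t) (c i1) (g j)). rewrite (d_sym (c t) (c i1)) in *. rewrite (d_sym (c i1) (g j)) in *.
  assert (L * d (c i2) (c i1) <= L * (2 * K2 + 1)) by (apply Nat.mul_le_mono_l; rewrite d_sym; auto).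
  assert (A * (t - i1) <= A * (L * (2 * K2 + 1) + L)) by (apply Nat.mul_le_mono_l; lia).
  lia.
Qed.


Lemma geod_dist x y g i : geod x y g -> i <= d x y -> d x (g i) = i /\ d (g i) y = d x y - i.
Proof.
  intros [G0 [G1 G2]] Hi. split.
  - pose proof (G2 0 i ltac:(lia) Hi) as E. rewrite G0 in E. lia.
  - pose proof (G2 i (d x y) Hi ltac:(lia)) as E. rewrite G1 in E. lia.
Qed.

Lemma proj_geod s : slim s -> forall w x y a, geod x y a ->
  exists i, i <= d x y /\ 2 * d w (a i) <= d w x + d w y - d x y + 4 * s + 2.
Proof.
  intros Sl w x y a Ha.
  destruct (geod_ex y w) as [b Hb]. destruct (geod_ex x w) as [c Hc].
  set (n := d x y).
  destruct (last_true (fun i => exists j, j <= d x w /\ d (a i) (c j) <= s) n) as [i [Hi [[j [Hj Hdj]] Hend]]].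
  { exists 0. split; [lia|]. destruct Ha as [A0 _]. destruct Hc as [C0 _]. rewrite A0, C0, d_refl. lia. }
  assert (Hb' : exists j', j' <= d y w /\ d (a i) (b j') <= s + 1).
  { destruct (Nat.eq_dec i n) as [E|E].
    - exists 0. split; [lia|]. destruct Ha as [_ [A1 _]]. destruct Hb as [B0 _]. subst i. unfold n. rewrite A1, B0, d_refl. lia.
    - destruct Hend as [E'|NQ]; [lia|].
      destruct (Sl x y w a b c Ha Hb Hc (S i) ltac:(unfold n in *; lia)) as [j' [[Hj' Hd']|[Hj' Hd']]].
      + exists j'. split; auto. pose proof (d_tri (a i) (a (S i)) (b j')).
        pose proof Ha as [_ [_ A2]]. rewrite (A2 i (S i)) in *; unfold n in *; lia.
      + exfalso. apply NQ. exists j'. auto. }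
  destruct Hb' as [j' [Hj' Hdj']].
  exists i. split; auto.
  destruct (geod_dist x y a i Ha Hi) as [E1 E2].
  destruct (geod_dist x w c j Hc Hj) as [E3 E4].
  destruct (geod_dist y w b j' Hb Hj') as [E5 E6].
  pose proof (d_tri x (c j) (a i)) as T1. pose proof (d_tri (a i) (b j') y) as T2.
  pose proof (d_tri w (c j) (a i)) as T3. pose proof (d_tri w (b j') (a i)) as T4.
  pose proof (d_tri x w y) as T5.
  rewrite (d_sym (b j') y), E5 in T2. rewrite (d_sym w (c j)), E4 in T3. rewrite (d_sym w (b j')), E6 in T4.
  rewrite (d_sym (c j) (a i)) in *. rewrite (d_sym (b j') (a i)) in *.
  rewrite (d_sym w x), (d_sym w y) in *. unfold n in *. lia.
Qed.

Lemma slim_fourpt s : slim s -> fourpt (3 * s + 1).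
Proof.
  intros Sl x y z w.
  destruct (geod_ex x y) as [a Ha]. destruct (geod_ex y z) as [b Hb]. destruct (geod_ex x z) as [c Hc].
  destruct (proj_geod s Sl w x y a Ha) as [i [Hi Hp]].
  pose proof (d_tri x w y).
  destruct (Sl x y z a b c Ha Hb Hc i Hi) as [j [[Hj Hd]|[Hj Hd]]].
  - destruct (geod_dist y z b j Hb Hj) as [E1 E2].
    pose proof (d_tri w (b j) y). pose proof (d_tri w (b j) z). pose proof (d_tri w (a i) (b j)).
    rewrite (d_sym (b j) y), E1 in *. rewrite E2 in *.
    rewrite (d_sym z w), (d_sym y w) in *. rewrite (d_sym x w) in *. lia.
  - destruct (geod_dist x z c j Hc Hj) as [E1 E2].
    pose proof (d_tri w (c j) x). pose proof (d_tri w (c j) z). pose proof (d_tri w (a i) (c j)).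
    rewrite (d_sym (c j) x), E1 in *. rewrite E2 in *.
    rewrite (d_sym z w), (d_sym y w) in *. rewrite (d_sym x w) in *. lia.
Qed.

End Metric.

Section Transfer.
Variables (V W : Type) (aV : V -> V -> Prop) (aW : W -> W -> Prop).
Hypothesis cV : gconn V aV.
Hypothesis cW : gconn W aW.
Variables (f : V -> W) (g : W -> V) (A1 A2 B : nat).
Hypothesis f_lip : forall u v, step V aV u v -> d W aW (f u) (f v) <= A1.
Hypothesis g_lip : forall u v, step W aW u v -> d V aV (g u) (g v) <= A2.
Hypothesis fg_id : forall w, d W aW (f (g w)) w <= B.

Lemma lip_gen (X Y : Type) (aX : X -> X -> Prop) (aY : Y -> Y -> Prop) (h : X -> Y) (A : nat) :
  gconn X aX -> gconn Y aY ->
  (forall u v, step X aX u v -> d Y aY (h u) (h v) <= A) ->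
  forall u v, d Y aY (h u) (h v) <= A * d X aX u v.
Proof.
  intros CX CY H u v.
  destruct (upath_seq X aX _ _ _ (d_path X aX CX u v)) as [p [P0 [P1 P2]]].
  pose proof (seq_lip Y aY CY (fun i => h (p i)) A (d X aX u v)) as L.
  specialize (L (fun i Hi => H _ _ (P2 i Hi)) 0 (d X aX u v) ltac:(lia) ltac:(lia)).
  simpl in L. rewrite P0, P1 in L. lia.
Qed.

Lemma transfer delta : fourpt V aV delta -> exists delta', fourpt W aW delta'.
Proof.
  intros F. pose proof (fourpt_slim V aV cV delta F) as Sl. set (s := 3 * delta + 1) in *.
  set (A := A2 + 1). set (L := A1 + 2 * B).
  destruct (morse1 V aV cV s A L Sl ltac:(unfold A; lia)) as [K1 HK1].
  destruct (morse2 V aV cV s A L Sl ltac:(unfold A; lia)) as [K2 HK2].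
  pose proof (lip_gen V W aV aW f A1 cV cW f_lip) as fL.
  pose proof (lip_gen W V aW aV g A2 cW cV g_lip) as gL.
  assert (QG : forall x y a, geod W aW x y a ->
     apath V aV A (d W aW x y) (fun i => g (a i)) /\ qg V aV L (d W aW x y) (fun i => g (a i))).
  { intros x y a Ha. pose proof Ha as [_ [_ G2]]. split.
    - intros i Hi. pose proof (gL (a i) (a (S i))). rewrite G2 in H; try lia; unfold A; nia.
    - intros i j Hi Hj. rewrite <- G2 by auto.
      pose proof (fg_id (a i)). pose proof (fg_id (a j)).
      pose proof (fL (g (a i)) (g (a j))).
      pose proof (d_tri W aW cW (a i) (f (g (a i))) (a j)).
      pose proof (d_tri W aW cW (f (g (a i))) (f (g (a j))) (a j)).
      rewrite (d_sym W aW cW (a i) (f (g (a i)))) in *.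
      unfold L. nia. }
  exists (3 * (A1 * (K1 + s + K2) + 2 * B) + 1). apply slim_fourpt; auto.
  intros x y z a b c Ha Hb Hc i Hi.
  destruct (QG x y a Ha) as [Pa Qa]. destruct (QG y z b Hb) as [Pb Qb]. destruct (QG x z c Hc) as [Pc Qc].
  pose proof Ha as [A0 [A1' _]]. pose proof Hb as [B0 [B1 _]]. pose proof Hc as [C0 [C1 _]].
  destruct (geod_ex V aV cV (g x) (g y)) as [a' Ha'].
  destruct (geod_ex V aV cV (g y) (g z)) as [b' Hb'].
  destruct (geod_ex V aV cV (g x) (g z)) as [c' Hc'].
  assert (Ha'' : geod V aV ((fun i => g (a i)) 0) ((fun i => g (a i)) (d W aW x y)) a')
    by (simpl; rewrite A0, A1'; auto).
  assert (Hb'' : geod V aV ((fun i => g (b i)) 0) ((fun i => g (b i)) (d W aW y z)) b')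
    by (simpl; rewrite B0, B1; auto).
  assert (Hc'' : geod V aV ((fun i => g (c i)) 0) ((fun i => g (c i)) (d W aW x z)) c')
    by (simpl; rewrite C0, C1; auto).
  destruct (HK1 _ _ _ Pa Qa Ha'' i Hi) as [j [Hj Hdj]]. simpl in Hj, Hdj.
  rewrite A0, A1' in Hj.
  assert (Fin : forall u v, d V aV (g u) (g v) <= K1 + s + K2 -> d W aW u v <= A1 * (K1 + s + K2) + 2 * B).
  { intros u v Huv. pose proof (fL (g u) (g v)).
    pose proof (fg_id u). pose proof (fg_id v).
    pose proof (d_tri W aW cW u (f (g u)) v). pose proof (d_tri W aW cW (f (g u)) (f (g v)) v).
    rewrite (d_sym W aW cW u (f (g u))) in *.
    assert (A1 * d V aV (g u) (g v) <= A1 * (K1 + s + K2)) by (apply Nat.mul_le_mono_l; auto). lia. }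
  destruct (Sl (g x) (g y) (g z) a' b' c' Ha' Hb' Hc' j Hj) as [j' [[Hj' Hd']|[Hj' Hd']]].
  - rewrite <- B0, <- B1 in Hj'.
    destruct (HK2 _ _ _ Pb Qb Hb'' j' Hj') as [i' [Hi' Hdi']]. simpl in Hdi'.
    exists i'. left. split; auto. apply Fin.
    pose proof (d_tri V aV cV (g (a i)) (a' j) (b' j')).
    pose proof (d_tri V aV cV (g (a i)) (b' j') (g (b i'))). lia.
  - rewrite <- C0, <- C1 in Hj'.
    destruct (HK2 _ _ _ Pc Qc Hc'' j' Hj') as [i' [Hi' Hdi']]. simpl in Hdi'.
    exists i'. right. split; auto. apply Fin.
    pose proof (d_tri V aV cV (g (a i)) (a' j) (c' j')).
    pose proof (d_tri V aV cV (g (a i)) (c' j') (g (c i'))). lia.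
Qed.

End Transfer.
Open Scope R_scope.

Section Bridge.
Variable Gr : wgraph.
Variable E : vert Gr -> vert Gr -> Prop.
Hypothesis HE : forall u v l, wedge Gr u v l <-> (l = 1 /\ E u v).

Lemma walk_up u v l : walk u v l -> exists n, upath _ E u v n /\ l = INR n.
Proof.
  induction 1 as [u|u w v l l' He Hw IH].
  - exists 0%nat. split. constructor. simpl; auto.
  - destruct IH as [n [Hn Hl]]. exists (S n). split.
    + econstructor; [|eauto]. destruct He as [He|He]; apply HE in He; destruct He as [_ He]; [left|right]; auto.
    + rewrite S_INR. destruct He as [He|He]; apply HE in He; destruct He as [He _]; subst; lra.
Qed.

Lemma up_walk u v n : upath _ E u v n -> walk u v (INR n).
Proof.
  induction 1 as [u|u w v n Hs Hp IH].
  - constructor.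
  - rewrite S_INR. replace (INR n + 1) with (1 + INR n) by lra.
    econstructor; [|eauto]. destruct Hs as [Hs|Hs]; [left|right]; apply HE; auto.
Qed.

Lemma conn_iff : connected Gr <-> gconn _ E.
Proof.
  split.
  - intros C u v. destruct (C u v) as [l Hl]. destruct (walk_up _ _ _ Hl) as [n [Hn _]]. eauto.
  - intros C u v. destruct (C u v) as [n Hn]. eexists; apply up_walk; eauto.
Qed.

Lemma is_dist_iff (C : gconn _ E) u v r : is_dist u v r <-> r = INR (d _ E u v).
Proof.
  split.
  - intros [H1 H2]. apply Rle_antisym.
    + apply H1. apply up_walk. apply d_path; auto.
    + apply Rnot_lt_le. intros Hlt.
      destruct (H2 (INR (d _ E u v) - r) ltac:(lra)) as [l [Hw Hl]].
      destruct (walk_up _ _ _ Hw) as [n [Hn Hln]]. subst l.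
      pose proof (d_min _ E C _ _ _ Hn). apply le_INR in H. lra.
  - intros ->. split.
    + intros l Hw. destruct (walk_up _ _ _ Hw) as [n [Hn Hln]]. subst l.
      apply le_INR. apply d_min; auto.
    + intros eps He. exists (INR (d _ E u v)). split. apply up_walk, d_path; auto. lra.
Qed.

Lemma hyp_iff : hyperbolic Gr <-> (gconn _ E /\ exists delta, fourpt _ E delta).
Proof.
  split.
  - intros [C [delta [Hd H]]]. apply conn_iff in C. split; auto.
    destruct (INR_unbounded delta) as [k Hk].
    exists k.
    intros x y z w.
    pose proof (H x y z w _ _ _ _ _ _
      (proj2 (is_dist_iff C x y _) eq_refl) (proj2 (is_dist_iff C x z _) eq_refl)
      (proj2 (is_dist_iff C y z _) eq_refl) (proj2 (is_dist_iff C w x _) eq_refl)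
      (proj2 (is_dist_iff C w y _) eq_refl) (proj2 (is_dist_iff C w z _) eq_refl)) as Q.
    unfold gprod, Rmin in Q.
    rewrite (d_sym _ E C w x), (d_sym _ E C w y) in Q.
    destruct (Rle_dec _ _) as [_|_].
    + assert (d _ E x y + d _ E z w <= d _ E x z + d _ E y w + 2 * k)%nat.
      { apply INR_le. rewrite !plus_INR, mult_INR. simpl (INR 2).
        rewrite (d_sym _ E C z w). lra. }
      lia.
    + assert (d _ E x y + d _ E z w <= d _ E x w + d _ E y z + 2 * k)%nat.
      { apply INR_le. rewrite !plus_INR, mult_INR. simpl (INR 2).
        rewrite (d_sym _ E C z w). lra. }
      lia.
  - intros [C [k F]]. split. apply conn_iff; auto.
    exists (INR k). split. apply pos_INR.
    intros x y z w dxy dxz dyz dwx dwy dwz H1 H2 H3 H4 H5 H6.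
    apply (is_dist_iff C) in H1, H2, H3, H4, H5, H6. subst.
    specialize (F x y z w).
    rewrite (d_sym _ E C z w), (d_sym _ E C y w), (d_sym _ E C x w) in F.
    unfold gprod, Rmin.
    destruct (Nat.max_spec (d _ E x z + d _ E w y) (d _ E w x + d _ E y z)) as [[Hm Hm']|[Hm Hm']];
      rewrite Hm' in F; apply le_INR in F; rewrite !plus_INR, mult_INR in F; simpl (INR 2) in F;
      try (apply lt_INR in Hm; rewrite !plus_INR in Hm); try (apply le_INR in Hm; rewrite !plus_INR in Hm);
      destruct (Rle_dec _ _); lra.
Qed.

End Bridge.
Open Scope nat_scope.

Section Grp.
Variable G : Group.

Lemma mul_inv_r (x : G) : gmul x (ginv x) = gone.
Proof.
  set (y := ginv x).
  rewrite <- (gmul1 G (gmul x y)).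
  rewrite <- (gmulV G y) at 1.
  rewrite <- gmulA. rewrite (gmulA G y x y).
  replace (gmul y x) with (@gone G) by (symmetry; apply gmulV). rewrite gmul1. apply gmulV.
Qed.

Lemma mul_1_r (x : G) : gmul x gone = x.
Proof. rewrite <- (gmulV G x), gmulA, mul_inv_r, gmul1. auto. Qed.

Definition Egen (S : G -> Prop) (u v : G) : Prop := exists s, S s /\ v = gmul u s.

Lemma gen_path (S : G -> Prop) l : (forall s, In s l -> S s \/ S (ginv s)) ->
  forall u, upath _ (Egen S) u (gmul u (fold_right gmul gone l)) (length l).
Proof.
  induction l as [|s l IH]; intros Hl u; simpl.
  - rewrite mul_1_r. constructor.
  - rewrite gmulA. econstructor; [|apply IH; intros; apply Hl; simpl; auto].
    destruct (Hl s (or_introl eq_refl)) as [Hs|Hs].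
    + left. exists s. auto.
    + right. exists (ginv s). split; auto. rewrite <- gmulA, mul_inv_r, mul_1_r. auto.
Qed.

Lemma gen_conn (S : G -> Prop) : generates S -> gconn _ (Egen S).
Proof.
  intros Hg u v. destruct (Hg (gmul (ginv u) v)) as [l [Hl E]].
  exists (length l). pose proof (gen_path S l Hl u) as P. rewrite <- E in P.
  rewrite gmulA, mul_inv_r, gmul1 in P. auto.
Qed.

Lemma lcoset_self (K : G -> Prop) g : is_subgroup K -> lcoset g K g.
Proof. intros [H1 _]. exists gone. split; auto. rewrite mul_1_r; auto. Qed.

Lemma lcoset_diff (K : G -> Prop) c a a' : is_subgroup K -> lcoset c K a -> lcoset c K a' ->
  exists h, K h /\ a' = gmul a h.
Proof.
  intros [K1 [K2 K3]] [h1 [Hh1 E1]] [h2 [Hh2 E2]]. exists (gmul (ginv h1) h2). split; auto.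
  subst. rewrite gmulA, <- (gmulA G c h1), mul_inv_r, mul_1_r. auto.
Qed.

Lemma lcoset_mem (K : G -> Prop) c a h : is_subgroup K -> lcoset c K a -> K h -> lcoset c K (gmul a h).
Proof.
  intros [K1 [K2 K3]] [h1 [Hh1 E1]] Hh. exists (gmul h1 h). split; auto. subst. symmetry; apply gmulA.
Qed.

End Grp.

Definition near_up (V : Type) (E : V -> V -> Prop) u v k := exists n, (n <= k)%nat /\ upath V E u v n.

Lemma near_trans V E u v w k k' : near_up V E u v k -> near_up V E v w k' -> near_up V E u w (k + k').
Proof. intros [n [Hn P]] [n' [Hn' P']]. exists (n + n')%nat. split. lia. eapply upath_app; eauto. Qed.

Lemma near_sym V E u v k : near_up V E u v k -> near_up V E v u k.
Proof. intros [n [Hn P]]. exists n. split; auto. apply upath_rev; auto. Qed.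

Lemma near_refl V E u : near_up V E u u 0.
Proof. exists 0%nat. split; auto. constructor. Qed.

Lemma near_step V E u v : step V E u v -> near_up V E u v 1.
Proof. intros. exists 1%nat. split; auto. econstructor; eauto. constructor. Qed.

Lemma near_d V E u v k : gconn V E -> near_up V E u v k -> (d V E u v <= k)%nat.
Proof. intros C [n [Hn P]]. pose proof (d_min V E C _ _ _ P). lia. Qed.

Lemma map_path (V W : Type) (EV : V -> V -> Prop) (EW : W -> W -> Prop) (f : V -> W) k :
  (forall u v, step V EV u v -> near_up W EW (f u) (f v) k) ->
  forall u v n, upath V EV u v n -> near_up W EW (f u) (f v) (k * n).
Proof.
  intros H u v n P. induction P.
  - rewrite Nat.mul_0_r. apply near_refl.
  - replace (k * S n)%nat with (k + k * n)%nat by lia. eapply near_trans; eauto.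
Qed.

Section RC.
Variables (G : Group) (m : nat) (H : nat -> G -> Prop) (X : list G).
Hypothesis Hm : (0 < m)%nat.
Hypothesis Hsub : forall i, (i < m)%nat -> is_subgroup (H i).
Hypothesis Hgen : rel_generating m H X.

Definition Srel (s : G) : Prop := In s X \/ exists i, (i < m)%nat /\ H i s.
Definition Erel := Egen G Srel.
Definition Xp (x : G) : Prop := In x X \/ In (ginv x) X \/ x = gone.
Definition Ecos (C D : @Coset G m H) : Prop := proj1_sig C <> proj1_sig D /\
  exists a b x, proj1_sig C a /\ proj1_sig D b /\ Xp x /\ b = gmul a x.

Definition cosi (i : nat) (Hi : (i < m)%nat) (u : G) : @Coset G m H :=
  exist _ (lcoset u (H i)) (ex_intro _ i (ex_intro _ u (conj Hi eq_refl))).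
Definition cos0 := cosi 0 Hm.

Lemma rep_ex (C : @Coset G m H) : exists g, exists i, (i < m)%nat /\ proj1_sig C = lcoset g (H i).
Proof. destruct C as [C [i [g [Hi E]]]]. simpl. eauto. Qed.

Definition rep (C : @Coset G m H) : G := proj1_sig (constructive_indefinite_description _ (rep_ex C)).

Lemma rep_spec C : exists i, (i < m)%nat /\ proj1_sig C = lcoset (rep C) (H i).
Proof. unfold rep. destruct (constructive_indefinite_description _ (rep_ex C)) as [g Hg]. simpl. auto. Qed.

Lemma mem_rep C : proj1_sig C (rep C).
Proof. destruct (rep_spec C) as [i [Hi E]]. rewrite E. apply lcoset_self; auto. Qed.

Lemma cos_eq (C D : @Coset G m H) : proj1_sig C = proj1_sig D -> C = D.
Proof. destruct C as [C pC], D as [D pD]. simpl. intros E. subst. f_equal. apply proof_irrelevance. Qed.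

Lemma cos_adj1 C D a x : proj1_sig C a -> proj1_sig D (gmul a x) -> Xp x -> near_up _ Ecos C D 1.
Proof.
  intros Ha Hb Hx. destruct (classic (proj1_sig C = proj1_sig D)) as [E|E].
  - apply cos_eq in E. subst. exists 0%nat. split; auto. constructor.
  - apply near_step. left. split; auto. exists a, (gmul a x), x. auto.
Qed.

Lemma cos_share C D a : proj1_sig C a -> proj1_sig D a -> near_up _ Ecos C D 1.
Proof.
  intros Ha Hb. apply (cos_adj1 C D a gone Ha); [rewrite mul_1_r; auto|right; right; auto].
Qed.

Lemma near_mono V E u v k k' : (k <= k')%nat -> near_up V E u v k -> near_up V E u v k'.
Proof. intros Hk [n [Hn P]]. exists n. split; auto. lia. Qed.

Lemma rel_to_cos u v : step _ Erel u v -> near_up _ Ecos (cos0 u) (cos0 v) 2.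
Proof.
  assert (K : forall u v, Erel u v -> near_up _ Ecos (cos0 u) (cos0 v) 2).
  { intros u' v' [s [[Hs|[i [Hi Hs]]] E]]; subst v'.
    - apply (near_mono _ _ _ _ 1); auto.
      apply (cos_adj1 _ _ u' s); simpl; try (apply lcoset_self; auto). left; auto.
    - apply (near_trans _ _ _ (cosi i Hi u') _ 1 1).
      + apply (cos_share _ _ u'); simpl; apply lcoset_self; auto.
      + apply (cos_share _ _ (gmul u' s)); simpl.
        * apply lcoset_mem; auto. apply lcoset_self; auto.
        * apply lcoset_self; auto. }
  intros [h|h]; [apply K; auto|apply near_sym; apply K; auto].
Qed.

Lemma in_rep_coset C a : proj1_sig C a -> near_up _ Erel (rep C) a 1.
Proof.
  intros Ha. destruct (rep_spec C) as [i [Hi E]]. rewrite E in Ha.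
  destruct Ha as [h [Hh Ea]]. apply near_step. left. exists h. split; auto. right. eauto.
Qed.

Lemma cos_to_rel C D : step _ Ecos C D -> near_up _ Erel (rep C) (rep D) 3.
Proof.
  assert (K : forall C D, Ecos C D -> near_up _ Erel (rep C) (rep D) 3).
  { intros C' D' [_ [a [b [x [Ha [Hb [Hx E]]]]]]].
    apply (near_trans _ _ _ a _ 1 2). apply in_rep_coset; auto.
    apply (near_trans _ _ _ b _ 1 1); [|apply near_sym, in_rep_coset; auto].
    destruct Hx as [Hx|[Hx|Hx]].
    - apply near_step. left. exists x. split; auto. left; auto.
    - apply near_step. right. exists (ginv x). split. left; auto.
      subst b. rewrite <- gmulA, mul_inv_r, mul_1_r. auto.
    - subst x. rewrite mul_1_r in E. subst. apply (near_mono _ _ _ _ 0); auto. apply near_refl. }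
  intros [h|h]; [apply K; auto|apply near_sym; apply K; auto].
Qed.

Lemma fg_cos C : near_up _ Ecos (cos0 (rep C)) C 1.
Proof. apply (cos_share _ _ (rep C)). simpl. apply lcoset_self; auto. apply mem_rep. Qed.

Lemma fg_rel u : near_up _ Erel (rep (cos0 u)) u 1.
Proof. apply in_rep_coset. simpl. apply lcoset_self; auto. Qed.

Lemma conn_rel : gconn _ Erel.
Proof. apply gen_conn. exact Hgen. Qed.

Lemma conn_cos : gconn _ Ecos.
Proof.
  intros C D. destruct (conn_rel (rep C) (rep D)) as [n P].
  pose proof (map_path _ _ _ _ cos0 2 rel_to_cos _ _ _ P) as Q.
  pose proof (near_trans _ _ _ _ _ _ _ (near_sym _ _ _ _ _ (fg_cos C)) Q) as Q2.
  destruct (near_trans _ _ _ _ _ _ _ Q2 (fg_cos D)) as [k [_ Pk]]. eauto.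
Qed.

Lemma rel_cos_iff : hyperbolic (rel_cayley m H X) <-> hyperbolic (coset_graph m H X).
Proof.
  rewrite (hyp_iff (rel_cayley m H X) Erel) by (intros; apply iff_refl).
  rewrite (hyp_iff (coset_graph m H X) Ecos) by (intros; apply iff_refl).
  pose proof conn_rel as CR. pose proof conn_cos as CC.
  split; intros [_ [delta F]]; split; auto.
  - refine (transfer _ _ Erel Ecos CR CC cos0 rep 2 3 1 _ _ _ delta F).
    + intros. apply near_d; auto. apply rel_to_cos; auto.
    + intros. apply near_d; auto. apply cos_to_rel; auto.
    + intros. apply near_d; auto. apply fg_cos.
  - refine (transfer _ _ Ecos Erel CC CR rep cos0 3 2 1 _ _ _ delta F).
    + intros. apply near_d; auto. apply cos_to_rel; auto.
    + intros. apply near_d; auto. apply rel_to_cos; auto.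
    + intros. apply near_d; auto. apply fg_rel.
Qed.

End RC.
Open Scope R_scope.

Lemma walk_app (Gr : wgraph) (u v w : vert Gr) l l' : walk u v l -> walk v w l' -> walk u w (l + l').
Proof.
  induction 1 as [u|u x v l1 l2 He Hw IH]; intros Hv.
  - replace (0 + l') with l' by lra. auto.
  - replace (l1 + l2 + l') with (l1 + (l2 + l')) by lra. econstructor; eauto.
Qed.

Section CO.
Variables (G : Group) (m : nat) (H : nat -> G -> Prop) (X : list G).
Hypothesis Hm : (0 < m)%nat.
Hypothesis Hsub : forall i, (i < m)%nat -> is_subgroup (H i).
Hypothesis Hgen : rel_generating m H X.

Let Gr := coned_off m H X.
Let CR := conn_rel G m H X Hgen.
Let dr (a b : G) : R := INR (d G (Erel G m H X) a b).

Definition NN (u : vert Gr) (a : G) : Prop :=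
  match u with inl g => a = g | inr C => proj1_sig C a end.
Definition ee (u : vert Gr) : R := match u with inl _ => 0 | inr _ => 1/2 end.

Lemma dr_tri a b c : dr a c <= dr a b + dr b c.
Proof. unfold dr. rewrite <- plus_INR. apply le_INR. apply d_tri; auto. Qed.

Lemma dr_sym a b : dr a b = dr b a.
Proof. unfold dr. rewrite d_sym; auto. Qed.

Lemma dr_refl a : dr a a = 0.
Proof. unfold dr. rewrite d_refl; auto. Qed.

Lemma dr_X a s : In s X -> dr a (gmul a s) <= 1.
Proof.
  intros Hs. unfold dr. replace 1 with (INR 1) by auto. apply le_INR.
  apply (d_step _ _ CR). left. exists s. split; auto. left; auto.
Qed.

Lemma dr_coset (C : @Coset G m H) a a' : proj1_sig C a -> proj1_sig C a' -> dr a a' <= 1.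
Proof.
  destruct C as [Cp [i [c [Hi E]]]]. simpl. subst. intros Ha Ha'.
  destruct (lcoset_diff G (H i) c a a' (Hsub i Hi) Ha Ha') as [h [Hh E]].
  unfold dr. replace 1 with (INR 1) by auto. apply le_INR.
  apply (d_step _ _ CR). left. exists h. split; auto. right; eauto.
Qed.

Lemma walk_lower (u v : vert Gr) l : walk u v l ->
  forall a b, NN u a -> NN v b -> dr a b <= l + ee u + ee v.
Proof.
  induction 1 as [u|u w v l l' He Hw IH]; intros a b Ha Hb.
  - destruct u as [g|C]; simpl in *.
    + subst. rewrite dr_refl. lra.
    + pose proof (dr_coset C a b Ha Hb). lra.
  - destruct He as [He|He].
    + destruct u as [g|C]; destruct w as [g'|C']; simpl in He; try contradiction; simpl in Ha; subst a.
      * destruct He as [El [s [Hs E]]]. subst.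
        pose proof (IH (gmul g s) b eq_refl Hb). pose proof (dr_tri g (gmul g s) b).
        pose proof (dr_X g s Hs). cbn [ee] in *. lra.
      * destruct He as [El Hg]. subst.
        pose proof (IH g b Hg Hb). cbn [ee] in *. lra.
    + destruct u as [g|C]; destruct w as [g'|C']; simpl in He; try contradiction.
      * destruct He as [El [s [Hs E]]]. simpl in Ha. subst.
        pose proof (IH g' b eq_refl Hb). pose proof (dr_tri (gmul g' s) g' b).
        pose proof (dr_X g' s Hs). rewrite dr_sym in H2. cbn [ee] in *. lra.
      * destruct He as [El Hg]. subst. simpl in Ha.
        pose proof (IH g' b eq_refl Hb). pose proof (dr_tri a g' b).
        pose proof (dr_coset C a g' Ha Hg). cbn [ee] in *. lra.
Qed.


Lemma erel_walk (a b : G) : Erel G m H X a b ->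
  @walk Gr (inl a) (inl b) 1 /\ @walk Gr (inl b) (inl a) 1.
Proof.
  intros [s [[Hs|[i [Hi Hs]]] E]]; subst b.
  - split.
    + replace 1 with (1 + 0) by lra. econstructor; [|constructor]. left. simpl. split; eauto.
    + replace 1 with (1 + 0) by lra. econstructor; [|constructor]. right. simpl. split; eauto.
  - set (C := cosi G m H i Hi a).
    assert (Ma : proj1_sig C a) by (apply lcoset_self; auto).
    assert (Mb : proj1_sig C (gmul a s)) by (apply lcoset_mem; auto; apply lcoset_self; auto).
    split.
    + replace 1 with (1/2 + (1/2 + 0)) by lra. econstructor; [|econstructor; [|constructor]].
      * left. instantiate (1 := inr C). simpl. auto.
      * right. simpl. auto.
    + replace 1 with (1/2 + (1/2 + 0)) by lra. econstructor; [|econstructor; [|constructor]].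
      * left. instantiate (1 := inr C). simpl. auto.
      * right. simpl. auto.
Qed.

Lemma upath_walk a b n : upath G (Erel G m H X) a b n -> @walk Gr (inl a) (inl b) (INR n).
Proof.
  induction 1 as [u|u w v n Hs Hp IH].
  - constructor.
  - rewrite S_INR. replace (INR n + 1) with (1 + INR n) by lra.
    eapply walk_app; [|exact IH].
    destruct Hs as [Hs|Hs]; apply erel_walk in Hs; tauto.
Qed.

Lemma rep_walk (u : vert Gr) : exists a, NN u a /\ @walk Gr u (inl a) (ee u) /\ @walk Gr (inl a) u (ee u).
Proof.
  destruct u as [g|C].
  - exists g. simpl. split; auto. split; constructor.
  - pose proof (mem_rep G m H Hsub C) as Mc. exists (rep G m H C). simpl. split; auto.
    split; replace (1/2) with (1/2 + 0) by lra; (econstructor; [|constructor]).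
    + right. simpl. auto.
    + left. simpl. auto.
Qed.

Lemma is_dist_inl a b : @is_dist Gr (inl a) (inl b) (dr a b).
Proof.
  split.
  - intros l Hl. pose proof (walk_lower _ _ _ Hl a b eq_refl eq_refl). cbn [ee] in *. lra.
  - intros eps He. exists (dr a b). split; [|lra]. apply upath_walk. apply d_path; auto.
Qed.

Lemma dist_close (u v : vert Gr) r a b : @is_dist Gr u v r -> NN u a -> NN v b ->
  @walk Gr u (inl a) (ee u) -> @walk Gr (inl b) v (ee v) ->
  r <= dr a b + 1 /\ dr a b <= r + 1.
Proof.
  intros [D1 D2] Ha Hb Wa Wb.
  assert (E1 : ee u <= 1/2) by (destruct u; simpl; lra).
  assert (E2 : ee v <= 1/2) by (destruct v; simpl; lra).
  assert (E3 : 0 <= ee u) by (destruct u; simpl; lra).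
  assert (E4 : 0 <= ee v) by (destruct v; simpl; lra).
  split.
  - pose proof (D1 _ (walk_app _ _ _ _ _ _ (walk_app _ _ _ _ _ _ Wa (upath_walk _ _ _ (d_path _ _ CR a b))) Wb)).
    fold (dr a b) in H0. lra.
  - apply Rnot_lt_le. intros Hlt. destruct (D2 (dr a b - r - 1) ltac:(lra)) as [l [Hw Hl]].
    pose proof (walk_lower _ _ _ Hw a b Ha Hb). lra.
Qed.

Lemma coned_conn : connected Gr.
Proof.
  intros u v. destruct (rep_walk u) as [a [_ [Wa _]]]. destruct (rep_walk v) as [b [_ [_ Wb]]].
  destruct (CR a b) as [n Hn].
  eexists. apply (walk_app _ _ _ _ _ _ (walk_app _ _ _ _ _ _ Wa (upath_walk _ _ _ Hn)) Wb).
Qed.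

Lemma rel_coned_iff : hyperbolic (rel_cayley m H X) <-> hyperbolic Gr.
Proof.
  assert (HE : forall u v l, wedge (rel_cayley m H X) u v l <-> (l = 1 /\ Erel G m H X u v))
    by (intros; apply iff_refl).
  split.
  - intros Hh. apply (hyp_iff _ _ HE) in Hh. destruct Hh as [_ [k F]].
    split. apply coned_conn.
    exists (INR k + 2). split. pose proof (pos_INR k); lra.
    intros x y z w rxy rxz ryz rwx rwy rwz D1 D2 D3 D4 D5 D6.
    destruct (rep_walk x) as [ax [Nx [Wx Wx']]]. destruct (rep_walk y) as [ay [Ny [Wy Wy']]].
    destruct (rep_walk z) as [az [Nz [Wz Wz']]]. destruct (rep_walk w) as [aw [Nw [Ww Ww']]].
    destruct (dist_close _ _ _ _ _ D1 Nx Ny Wx Wy').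
    destruct (dist_close _ _ _ _ _ D2 Nx Nz Wx Wz').
    destruct (dist_close _ _ _ _ _ D3 Ny Nz Wy Wz').
    destruct (dist_close _ _ _ _ _ D4 Nw Nx Ww Wx').
    destruct (dist_close _ _ _ _ _ D5 Nw Ny Ww Wy').
    destruct (dist_close _ _ _ _ _ D6 Nw Nz Ww Wz').
    specialize (F ax ay az aw). cbn [vert rel_cayley cayley] in F.
    assert (F' : dr ax ay + dr az aw <= dr ax az + dr ay aw + 2 * INR k \/
                 dr ax ay + dr az aw <= dr ax aw + dr ay az + 2 * INR k).
    { unfold dr. destruct (Nat.max_spec (d G (Erel G m H X) ax az + d G (Erel G m H X) ay aw) (d G (Erel G m H X) ax aw + d G (Erel G m H X) ay az))%nat
        as [[_ Hm']|[_ Hm']]; rewrite Hm' in F; apply le_INR in F;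
        rewrite !plus_INR, mult_INR in F; simpl (INR 2) in F; [right|left]; lra. }
    rewrite (dr_sym az aw), (dr_sym ay aw), (dr_sym ax aw) in F'.
    unfold gprod, Rmin. destruct (Rle_dec _ _); lra.
  - intros [C [delta [Hd Hh]]].
    split. apply (conn_iff _ _ HE). exact CR.
    exists delta. split; auto.
    intros x y z w dxy dxz dyz dwx dwy dwz H1 H2 H3 H4 H5 H6.
    apply (is_dist_iff _ _ HE CR) in H1, H2, H3, H4, H5, H6. subst.
    apply (Hh (inl x) (inl y) (inl z) (inl w)); apply is_dist_inl.
Qed.

End CO.

Theorem lemma2p1 (G : Group) (m : nat) (H : nat -> G -> Prop) (X : list G) :
  (0 < m)%nat ->
  (forall i, (i < m)%nat -> is_subgroup (H i)) ->
  rel_generating m H X ->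
  (hyperbolic (rel_cayley m H X) <-> hyperbolic (coset_graph m H X)) /\
  (generates (fun s => In s X) ->
     (hyperbolic (rel_cayley m H X) <-> hyperbolic (coned_off m H X))).
Proof.
  intros Hm Hsub Hgen. split.
  - apply rel_cos_iff; assumption.
  - intros _. apply rel_coned_iff; assumption.
Qed.
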